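(* Consider a population of $N$ units, $M$ of which have a certain attribute; $n$ units are drawn without replacement and $K$ is the number of drawn units having the attribute, so that $\Pr\{K=k\mid M\}=\binom Mk\binom{N-M}{n-k}/\binom Nn$, $k=0,1,\dots,n$. Let $I_K$ be the support of $K$, and let $\widehat M=\widehat M(k)$ be a function of $k\in I_K$ taking values in $\{m\in\mathbb{Z}:k\le m\le N\}$. Then $$\Pr\{K\le k\mid M\}\le\frac{\binom Mk\binom{N-M}{n-k}}{\binom{\widehat M}{k}\binom{N-\widehat M}{n-k}}\quad\text{for } k\in I_K\text{ such that }\widehat M(k)\le M,$$ $$\Pr\{K\ge k\mid M\}\le\frac{\binom Mk\binom{N-M}{n-k}}{\binom{\widehat M}{k}\binom{N-\widehat M}{n-k}}\quad\text{for } k\in I_K\text{ such that }\widehat M(k)\ge M.$$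
   Context: $\Pr\{\cdot\mid M\}$ denotes probability when the population contains $M$ units with the attribute. *)

(* Defs.v *)
From mathcomp Require Import all_boot all_order all_algebra.
Set Implicit Arguments. Unset Strict Implicit. Unset Printing Implicit Defensive.
Import Order.TTheory GRing.Theory Num.Theory.
Local Open Scope ring_scope.

Definition hyp (R : realFieldType) (N n M k : nat) : R :=
  ('C(M, k) * 'C(N - M, n - k))%:R / ('C(N, n))%:R.

Definition hyp_le (R : realFieldType) (N n M k : nat) : R :=
  \sum_(0 <= j < k.+1) hyp R N n M j.

Definition hyp_ge (R : realFieldType) (N n M k : nat) : R :=
  \sum_(k <= j < n.+1) hyp R N n M j.

Definition in_support (N n M k : nat) : bool :=
  (k <= n)%N && (0 < 'C(M, k) * 'C(N - M, n - k))%N.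

(* Main.v *)
Require Import Defs.
From mathcomp Require Import all_boot all_order all_algebra.
Import Order.TTheory GRing.Theory Num.Theory.

Lemma binL (x y p q : nat) : x <= y -> p <= q ->
  'C(y, p) * 'C(x, q) <= 'C(y, q) * 'C(x, p).
Proof.
move=> xy; elim: q => [|q IH]; first by rewrite leqn0 => /eqP ->.
rewrite leq_eqVlt => /orP [/eqP ->//|]; rewrite ltnS => pq.
have := IH pq => {}IH.
rewrite -(@leq_pmul2l q.+1) //.
have e1 := mul_bin_left x q. have e2 := mul_bin_left y q.
rewrite (mulnCA q.+1 ('C(y, p))) e1 (mulnA q.+1) e2.
have h1 : x - q <= y - q by apply: leq_sub2r.
have h2 := leq_mul (leqnn (x - q)) IH.
have h3 := leq_mul h1 (leqnn ('C(y, q) * 'C(x, p))).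
rewrite -mulnA (mulnCA ('C(y, p))).
exact: leq_trans h2 h3.
Qed.

Definition h (N n m j : nat) := 'C(m, j) * 'C(N - m, n - j).

Lemma TP (N n m1 m2 j1 j2 : nat) : m1 <= m2 -> j1 <= j2 ->
  h N n m2 j1 * h N n m1 j2 <= h N n m2 j2 * h N n m1 j1.
Proof.
move=> hm hj; rewrite /h.
have L1 := @binL _ _ _ _ hm hj.
have L2 := @binL _ _ _ _ (leq_sub2l N hm) (leq_sub2l n hj).
have := leq_mul L1 L2.
set a := 'C(m2, j1). set b := 'C(m1, j2). set c := 'C(m2, j2). set d := 'C(m1, j1).
set e := 'C(N - m1, n - j2). set f := 'C(N - m2, n - j1).
set g := 'C(N - m1, n - j1). set k := 'C(N - m2, n - j2).
move=> H; suff E1 : a * f * (b * e) = a * b * (e * f).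
  suff E2 : c * k * (d * g) = c * d * (g * k) by rewrite E1 E2.
  by rewrite mulnACA (mulnC k).
by rewrite mulnACA (mulnC f).
Qed.
Lemma vand (N n m : nat) : m <= N -> \sum_(0 <= j < n.+1) h N n m j = 'C(N, n).
Proof. by move=> mN; rewrite big_mkord /h binomial.Vandermonde subnKC. Qed.

Local Open Scope ring_scope.

Lemma ratle (R : realFieldType) (s c a H : nat) : (0 < c)%N -> (0 < H)%N -> (s * H <= a * c)%N ->
  (s%:R / c%:R : R) <= a%:R / H%:R.
Proof.
move=> c0 H0 le.
rewrite ler_pdivrMr ?ltr0n // mulrAC ler_pdivlMr ?ltr0n // -!natrM ler_nat.
by [].
Qed.

Lemma hypsum (R : realFieldType) N n M a b :
  \sum_(a <= j < b) hyp R N n M j = (\sum_(a <= j < b) h N n M j)%:R / ('C(N, n))%:R.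
Proof. by rewrite /hyp -mulr_suml natr_sum. Qed.

Theorem corollary5 (R : realFieldType) (N M n : nat) (Mhat : nat -> nat)
  (hMN : (M <= N)%N) (hnN : (n <= N)%N)
  (hMhat : forall k, in_support N n M k -> (k <= Mhat k <= N)%N) :
  forall k, in_support N n M k ->
    ((Mhat k <= M)%N ->
       0 < (('C(Mhat k, k) * 'C(N - Mhat k, n - k))%:R : R) ->
       hyp_le R N n M k <=
         ('C(M, k) * 'C(N - M, n - k))%:R /
         ('C(Mhat k, k) * 'C(N - Mhat k, n - k))%:R) /\
    ((M <= Mhat k)%N ->
       0 < (('C(Mhat k, k) * 'C(N - Mhat k, n - k))%:R : R) ->
       hyp_ge R N n M k <=
         ('C(M, k) * 'C(N - M, n - k))%:R /
         ('C(Mhat k, k) * 'C(N - Mhat k, n - k))%:R).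
Proof.
move=> k hk; have /andP [_ mhN] := hMhat k hk.
move: hk => /andP [kn _].
have c0 : (0 < 'C(N, n))%N by rewrite bin_gt0.
have hv := @vand _ n _ mhN.
split=> hle; rewrite ltr0n => H0.
- rewrite /hyp_le hypsum; apply: ratle => //.
  rewrite big_distrl /=.
  apply: (@leq_trans (\sum_(0 <= j < k.+1) h N n M k * h N n (Mhat k) j)).
    rewrite big_nat_cond [X in (_ <= X)%N]big_nat_cond; apply: leq_sum => j /andP [/andP [_ jk] _].
    exact: TP.
  rewrite -big_distrr /= leq_mul2l; apply/orP; right.
  rewrite -hv (@big_cat_nat _ _ _ k.+1 0 n.+1) //=; exact: leq_addr.
- rewrite /hyp_ge hypsum; apply: ratle => //.
  rewrite big_distrl /=.
  apply: (@leq_trans (\sum_(k <= j < n.+1) h N n M k * h N n (Mhat k) j)).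
    rewrite big_nat_cond [X in (_ <= X)%N]big_nat_cond; apply: leq_sum => j /andP [/andP [kj _] _].
    rewrite mulnC [X in (_ <= X)%N]mulnC; exact: TP.
  rewrite -big_distrr /= leq_mul2l; apply/orP; right.
  rewrite -hv (@big_cat_nat _ _ _ k 0 n.+1) //=; first exact: leq_addl.
  exact: ltnW.
Qed.
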